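(* Let $(S_n)_{n\ge0}$ be defined by $S_0=3$, $S_1=1$, $S_2=3$ and $S_{n+1}=S_n+S_{n-1}+S_{n-2}$ for $n\ge 2$. Let $\alpha,\beta,\gamma$ be the roots of $x^3-x^2-x-1=0$ and $C_n=\alpha^n\beta^n+\alpha^n\gamma^n+\beta^n\gamma^n$ for $n\ge0$. Then for all $n\ge 0$, $$S_nS_{2n}=S_{3n}+S_nC_n-3.$$
   Context: $S_n$ is the generalized Lucas (generalized Tribonacci) sequence. *)

(* Defs.v *)
(* complex numbers are modelled by algC (algebraic complex numbers),
   which contain all roots of x^3 - x^2 - x - 1. *)
From mathcomp Require Import all_boot all_order all_algebra all_field.
Set Implicit Arguments. Unset Strict Implicit. Unset Printing Implicit Defensive.

Fixpoint S (n : nat) : nat :=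
  match n with
  | 0 => 3
  | 1 => 1
  | 2 => 3
  | (((m.+1 as k).+1) as j).+1 => S j + S k + S m
  end.

(* Main.v *)
Require Import Defs.
From mathcomp Require Import all_boot all_order all_algebra all_field.
From mathcomp Require Import ring.
Import GRing.Theory Num.Theory.
Local Open Scope ring_scope.

Lemma step3 (x : algC) : x ^+ 3 = x ^+ 2 + x + 1 ->
  forall k, x ^+ k.+3 = x ^+ k.+2 + x ^+ k.+1 + x ^+ k.
Proof.
move=> hx k; rewrite -[k.+3]addn3 -[k.+2]addn2 -[k.+1]addn1 !exprD hx; ring.
Qed.

Lemma key (A B C : algC) :
  (A + B + C) * (A ^+ 2 + B ^+ 2 + C ^+ 2) =
  A ^+ 3 + B ^+ 3 + C ^+ 3 + (A + B + C) * (A * B + A * C + B * C) - 3 * (A * B * C).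
Proof. ring. Qed.

Theorem mainTheorem5 (alpha beta gamma : algC)
  (Hroots : 'X^3 - 'X^2 - 'X - 1 =
            ('X - alpha%:P) * ('X - beta%:P) * ('X - gamma%:P) :> {poly algC})
  (n : nat) :
  let C := alpha ^+ n * beta ^+ n + alpha ^+ n * gamma ^+ n + beta ^+ n * gamma ^+ n in
  (S n)%:R * (S (2 * n))%:R = (S (3 * n))%:R + (S n)%:R * C - 3.
Proof.
set a := alpha; set b := beta; set c := gamma.
have E : ('X - a%:P) * ('X - b%:P) * ('X - c%:P) =
   'X^3 - (a+b+c)%:P * 'X^2 + (a*b+a*c+b*c)%:P * 'X - (a*b*c)%:P :> {poly algC}.
  rewrite !polyCD !polyCM; ring.
rewrite E in Hroots.
have := congr1 (fun p : {poly algC} => p`_0) Hroots.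
have := congr1 (fun p : {poly algC} => p`_1) Hroots.
have := congr1 (fun p : {poly algC} => p`_2) Hroots.
rewrite /= !coefE /=.
rewrite !(mulr1, mulr0, subr0, sub0r, addr0, add0r, oppr0).
move=> H2 e2 H0.
have e1 : a + b + c = 1 by apply: oppr_inj; rewrite -H2.
have e3 : a * b * c = 1 by apply: oppr_inj; rewrite -H0.
have e2' : a * b + a * c + b * c = -1 by rewrite -e2.
have hroot : forall x, x = a \/ x = b \/ x = c -> x ^+ 3 = x ^+ 2 + x + 1.
  move=> x hx.
  have -> : x ^+ 3 = (a+b+c) * x ^+ 2 - (a*b+a*c+b*c) * x + a*b*c + (x-a)*(x-b)*(x-c) by ring.
  rewrite e1 e2' e3.
  have -> : (x-a)*(x-b)*(x-c) = 0.
    case: hx => [->|[->|->]]; ring.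
  ring.
pose p k := a ^+ k + b ^+ k + c ^+ k.
have Sp : forall k, (S k)%:R = p k /\ (S k.+1)%:R = p k.+1 /\ (S k.+2)%:R = p k.+2.
  elim=> [|k [h0 [h1 h2]]].
    rewrite /p /= !expr1 e1; split; first by ring.
    split => //.
    have -> : a ^+ 2 + b ^+ 2 + c ^+ 2 = (a+b+c)^+2 - 2 * (a*b+a*c+b*c) by ring.
    rewrite e1 e2'; ring.
  split => //; split => //.
  have -> : S k.+3 = (S k.+2 + S k.+1 + S k)%N by [].
  rewrite !natrD h0 h1 h2 /p.
  have ra := step3 a (hroot a (or_introl erefl)).
  have rb := step3 b (hroot b (or_intror (or_introl erefl))).
  have rc := step3 c (hroot c (or_intror (or_intror erefl))).
  rewrite ra rb rc.
  ring.
have hS : forall k, (S k)%:R = p k by move=> k; case: (Sp k).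
rewrite /= !hS /p.
rewrite mulnC [(3 * n)%N]mulnC !exprM.
have h1 : a ^+ n * b ^+ n * c ^+ n = 1 by rewrite -!exprMn e3 expr1n.
by rewrite key h1 mulr1.
Qed.
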